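(* There exists a computable function $f:\mathbb{N}\to\mathbb{N}$ such that the following holds. Let $G=(V,E)$ be an undirected graph with pathwidth $w$, let $\varphi$ be an $\mathit{MSO}_2$ formula interpreted over $G$, and let $n=|V|+|E|$ and $k=w+|\varphi|$. Then there exists an ordered binary decision diagram (OBDD) computing $\mathcal{F}_{\varphi,G}$ with at most $f(k)\cdot n$ nodes. (That is, the OBDD size is fixed-parameter linear in $n$ with respect to $k$.)
   Context: $\mathit{MSO}_2$: formulas are interpreted over a graph $G=(V,E)$ with two disjoint universes $U_V=V$ and $U_E=E$. There are four kinds of variables: vertex object variables (values in $V$), edge object variables (values in $E$), vertex set variables (subsets of $V$), edge set variables (subsets of $E$). Atomic formulas: $\mathit{Adj}(v,e)$ (true iff the vertex assigned to $v$ is an endpoint of the edge assigned to $e$); $x=y$ for object variables of the same sort; $x\in Y$ for an object variable and set variable of the same sort. Formulas are closed under $\neg$, $\wedge$ and existential quantification over variables of each kind, with the usual semantics. Size: atomic formulas have size 3, $|\neg\psi|=1+|\psi|$, $|\psi\wedge\rho|=1+|\psi|+|\rho|$, $|(\exists\cdot)\psi|=1+|\psi|$. Decision variables $\mathcal{D}_{\varphi,G}$: $[x=v]$ for each free vertex object variable $x$ of $\varphi$ and $v\in V$; $[x=e]$ for each free edge object variable $x$ and $e\in E$; $[v\in X]$ for each free vertex set variable $X$ and $v\in V$; $[e\in X]$ for each free edge set variable $X$ and $e\in E$. A Boolean assignment $\delta$ to $\mathcal{D}_{\varphi,G}$ is consistent if for every free vertex (resp. edge) object variable $x$ exactly one of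 $[x=u]$, $u\in V$ (resp. $[x=e]$, $e\in E$) is true; it then encodes the assignment $\alpha$ with $\alpha(x)=$ the unique $o$ with $\delta([x=o])=1$ and $\alpha(X)=\{o:\delta([o\in X])=1\}$. $\mathcal{F}_{\varphi,G}$ is the Boolean function on $\mathcal{D}_{\varphi,G}$ whose models are exactly the consistent assignments encoding assignments satisfying $\varphi$ on $G$. An OBDD is a rooted DAG with a unique source, internal decision nodes labeled by variables with a 0-edge and a 1-edge, and leaves labeled $0$ or $1$, such that along every path variables appear in accordance with a fixed strict linear order; it computes a function $f$ if its variables are among those of $f$ and the value obtained by following edges according to an assignment equals $f$ on that assignment. Pathwidth is the minimum width of a tree decomposition whose tree is a path. *)

(* Defs.v *)
From mathcomp Require Import all_boot.
Set Implicit Arguments. Unset Strict Implicit. Unset Printing Implicit Defensive.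

Inductive rcode : Type :=
| RZero | RSucc | RProj of nat
| RComp of rcode & seq rcode
| RPrec of rcode & rcode
| RMu of rcode.

Inductive reval : rcode -> seq nat -> nat -> Prop :=
| ev_zero xs : reval RZero xs 0
| ev_succ x xs : reval RSucc (x :: xs) x.+1
| ev_proj i xs : i < size xs -> reval (RProj i) xs (nth 0 xs i)
| ev_comp g hs xs ys y : revals hs xs ys -> reval g ys y -> reval (RComp g hs) xs y
| ev_prec0 g h xs y : reval g xs y -> reval (RPrec g h) (0 :: xs) y
| ev_precS g h n xs y z : reval (RPrec g h) (n :: xs) y ->
    reval h (n :: y :: xs) z -> reval (RPrec g h) (n.+1 :: xs) z
| ev_mu g xs n : reval g (n :: xs) 0 ->
    (forall m, m < n -> exists k, reval g (m :: xs) k.+1) -> reval (RMu g) xs n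
with revals : seq rcode -> seq nat -> seq nat -> Prop :=
| evs_nil xs : revals [::] xs [::]
| evs_cons h hs xs y ys : reval h xs y -> revals hs xs ys -> revals (h :: hs) xs (y :: ys).

Definition computable (f : nat -> nat) : Prop :=
  exists c : rcode, forall n, reval c [:: n] (f n).

Section Graph.
Variables (V E : finType) (src dst : E -> V).

Definition simple_graph : Prop :=
  (forall e, src e != dst e) /\
  (forall e1 e2, [set src e1; dst e1] = [set src e2; dst e2] -> e1 = e2).

Definition incident (v : V) (e : E) : bool := (v == src e) || (v == dst e).

Definition path_decomp (bags : seq {set V}) : Prop :=
  (forall v, exists2 B, B \in bags & v \in B) /\
  (forall e, exists2 B, B \in bags & (src e \in B) && (dst e \in B)) /\
  (forall i j k v, i <= j -> j <= k -> k < size bags ->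
      v \in nth set0 bags i -> v \in nth set0 bags k -> v \in nth set0 bags j).

Definition pd_width (bags : seq {set V}) : nat := (\max_(B <- bags) #|B|).-1.

Definition is_pathwidth (w : nat) : Prop :=
  (exists bags, path_decomp bags /\ pd_width bags = w) /\
  (forall bags, path_decomp bags -> w <= pd_width bags).
End Graph.

(* MSO_2 syntax: four disjoint sorts of variables, each named by nat.  *)
Inductive mso2 : Type :=
| FAdj of nat & nat          (* Adj(v,e): vertex obj var v, edge obj var e *)
| FEqV of nat & nat
| FEqE of nat & nat
| FInV of nat & nat          (* x \in X, vertex obj var, vertex set var *)
| FInE of nat & nat          (* x \in X, edge obj var, edge set var *)
| FNeg of mso2
| FAnd of mso2 & mso2
| FExV of nat & mso2
| FExE of nat & mso2
| FExVS of nat & mso2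
| FExES of nat & mso2.

Fixpoint msize (p : mso2) : nat :=
  match p with
  | FAdj _ _ | FEqV _ _ | FEqE _ _ | FInV _ _ | FInE _ _ => 3
  | FNeg q => (msize q).+1
  | FAnd q r => (msize q + msize r).+1
  | FExV _ q | FExE _ q | FExVS _ q | FExES _ q => (msize q).+1
  end.

Fixpoint freeV (p : mso2) (z : nat) : bool :=
  match p with
  | FAdj x _ => x == z | FEqV x y => (x == z) || (y == z)
  | FEqE _ _ => false | FInV x _ => x == z | FInE _ _ => false
  | FNeg q => freeV q z | FAnd q r => freeV q z || freeV r z
  | FExV x q => (x != z) && freeV q z
  | FExE _ q | FExVS _ q | FExES _ q => freeV q z
  end.
Fixpoint freeE (p : mso2) (z : nat) : bool :=
  match p with
  | FAdj _ y => y == z | FEqV _ _ => false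
  | FEqE x y => (x == z) || (y == z) | FInV _ _ => false | FInE x _ => x == z
  | FNeg q => freeE q z | FAnd q r => freeE q z || freeE r z
  | FExE x q => (x != z) && freeE q z
  | FExV _ q | FExVS _ q | FExES _ q => freeE q z
  end.
Fixpoint freeVS (p : mso2) (z : nat) : bool :=
  match p with
  | FAdj _ _ | FEqV _ _ | FEqE _ _ | FInE _ _ => false | FInV _ X => X == z
  | FNeg q => freeVS q z | FAnd q r => freeVS q z || freeVS r z
  | FExVS X q => (X != z) && freeVS q z
  | FExV _ q | FExE _ q | FExES _ q => freeVS q z
  end.
Fixpoint freeES (p : mso2) (z : nat) : bool :=
  match p with
  | FAdj _ _ | FEqV _ _ | FEqE _ _ | FInV _ _ => false | FInE _ X => X == z
  | FNeg q => freeES q z | FAnd q r => freeES q z || freeES r z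
  | FExES X q => (X != z) && freeES q z
  | FExV _ q | FExE _ q | FExVS _ q => freeES q z
  end.

Definition upd (T : Type) (a : nat -> T) (x : nat) (t : T) : nat -> T :=
  fun y => if y == x then t else a y.

Section Semantics.
Variables (V E : finType) (src dst : E -> V).

(* Assignments: object variables get option values (None = unassigned);
   every variable that is free or bound in the evaluated position is Some. *)
Fixpoint msat (aV : nat -> option V) (aE : nat -> option E)
    (aVS : nat -> {set V}) (aES : nat -> {set E}) (p : mso2) : bool :=
  match p with
  | FAdj x y => if (aV x, aE y) is (Some v, Some e) then incident src dst v e else false
  | FEqV x y => if (aV x, aV y) is (Some a, Some b) then a == b else false
  | FEqE x y => if (aE x, aE y) is (Some a, Some b) then a == b else false
  | FInV x X => if aV x is Some a then a \in aVS X else false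
  | FInE x X => if aE x is Some a then a \in aES X else false
  | FNeg q => ~~ msat aV aE aVS aES q
  | FAnd q r => msat aV aE aVS aES q && msat aV aE aVS aES r
  | FExV x q => [exists v : V, msat (upd aV x (Some v)) aE aVS aES q]
  | FExE x q => [exists e : E, msat aV (upd aE x (Some e)) aVS aES q]
  | FExVS X q => [exists S : {set V}, msat aV aE (upd aVS X S) aES q]
  | FExES X q => [exists S : {set E}, msat aV aE aVS (upd aES X S) q]
  end.

(* Decision variables: [x=v], [x=e], [v in X], [e in X] *)
Definition dvar : Type := ((nat * V) + (nat * E)) + ((nat * V) + (nat * E)).
Definition dObjV x v : dvar := inl (inl (x, v)).
Definition dObjE x e : dvar := inl (inr (x, e)).
Definition dSetV X v : dvar := inr (inl (X, v)).
Definition dSetE X e : dvar := inr (inr (X, e)).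

Definition Dvars (p : mso2) (d : dvar) : bool :=
  match d with
  | inl (inl (x, _)) => freeV p x
  | inl (inr (x, _)) => freeE p x
  | inr (inl (X, _)) => freeVS p X
  | inr (inr (X, _)) => freeES p X
  end.

Definition consistent (p : mso2) (delta : dvar -> bool) : Prop :=
  (forall x, freeV p x -> #|[set v | delta (dObjV x v)]| = 1) /\
  (forall x, freeE p x -> #|[set e | delta (dObjE x e)]| = 1).

(* the assignment encoded by delta (object variables not free in p are
   left unassigned; they are irrelevant) *)
Definition encV (p : mso2) (delta : dvar -> bool) (x : nat) : option V :=
  if freeV p x then [pick v | delta (dObjV x v)] else None.
Definition encE (p : mso2) (delta : dvar -> bool) (x : nat) : option E :=
  if freeE p x then [pick e | delta (dObjE x e)] else None.
Definition encVS (delta : dvar -> bool) (X : nat) : {set V} :=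
  [set v | delta (dSetV X v)].
Definition encES (delta : dvar -> bool) (X : nat) : {set E} :=
  [set e | delta (dSetE X e)].

(* F_{phi,G}(delta) holds iff delta is consistent and encodes a satisfying
   assignment (delta is only inspected on D_{phi,G}) *)
Definition Ffun (p : mso2) (delta : dvar -> bool) : Prop :=
  consistent p delta /\
  msat (encV p delta) (encE p delta) (encVS delta) (encES delta) p.
End Semantics.

(* The fixed strict linear order on variables is given by a duplicate- *)
(* free list [vorder] (earlier = smaller).                             *)
Inductive bdd_node (X : Type) (m : nat) : Type :=
| BLeaf of bool
| BDec of X & 'I_m & 'I_m.   (* variable, 0-child, 1-child *)

Record obdd (X : Type) : Type := OBDD {
  osize : nat;
  oroot : 'I_osize;
  onode : 'I_osize -> bdd_node X osize;
  vorder : seq X }.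
Arguments onode {X} o _.
Arguments oroot {X} o.
Arguments osize {X} o.
Arguments vorder {X} o.

Section OBDD.
Variables (X : eqType) (B : obdd X).

Definition is_child (i j : 'I_(osize B)) : bool :=
  if onode B i is BDec _ lo hi then (j == lo) || (j == hi) else false.

Definition var_of (i : 'I_(osize B)) : option X :=
  if onode B i is BDec x _ _ then Some x else None.

(* well-formed OBDD whose variables are among those of D:
   - unique source: the root has no parent and every other node has one;
   - variables on every edge strictly increase in the order vorder
     (hence along every path, and the graph is acyclic). *)
Definition wf_obdd (D : pred X) : Prop :=
  uniq (vorder B) /\
  (forall i x, var_of i = Some x -> D x /\ x \in vorder B) /\
  (forall i, ~~ is_child i (oroot B)) /\
  (forall j, j != oroot B -> exists i, is_child i j) /\
  (forall i j x y, is_child i j -> var_of i = Some x -> var_of j = Some y ->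
     index x (vorder B) < index y (vorder B)).

Inductive reaches (delta : X -> bool) : 'I_(osize B) -> bool -> Prop :=
| reach_leaf i b : onode B i = BLeaf X (osize B) b -> reaches delta i b
| reach_dec i x lo hi b : onode B i = BDec x lo hi ->
    reaches delta (if delta x then hi else lo) b -> reaches delta i b.

Definition obdd_computes (D : pred X) (F : (X -> bool) -> Prop) : Prop :=
  wf_obdd D /\
  forall delta : X -> bool,
    exists b, reaches delta (oroot B) b /\ (b = true <-> F delta).
End OBDD.

(* Main.v *)
Require Import Defs.
From mathcomp Require Import all_boot zify.
From Stdlib Require Import ClassicalEpsilon FunctionalExtensionality.
Set Implicit Arguments. Unset Strict Implicit. Unset Printing Implicit Defensive.

Fixpoint cst (n : nat) : rcode := if n is n'.+1 then RComp RSucc [:: cst n'] else RZero.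
Lemma cst_ok n xs : reval (cst n) xs n.
Proof.
elim: n => [|n IH] /=; first exact: ev_zero.
apply: (ev_comp (ys := [:: n])); first by apply: evs_cons => //; exact: evs_nil.
exact: ev_succ.
Qed.

Lemma proj_ok i xs : i < size xs -> reval (RProj i) xs (nth 0 xs i).
Proof. exact: ev_proj. Qed.

Definition addc := RPrec (RProj 0) (RComp RSucc [:: RProj 1]).
Lemma addc_ok n m : reval addc [:: n; m] (n + m).
Proof.
elim: n => [|n IH]; first by apply: ev_prec0; exact: (proj_ok (xs := [:: m])).
apply: (ev_precS IH).
apply: (ev_comp (ys := [:: n + m])); last exact: ev_succ.
apply: evs_cons; last exact: evs_nil.
exact: (proj_ok (xs := [:: n; n + m; m])).
Qed.

Definition mulc := RPrec RZero (RComp addc [:: RProj 2; RProj 1]).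
Lemma mulc_ok n m : reval mulc [:: n; m] (n * m).
Proof.
elim: n => [|n IH]; first by apply: ev_prec0; exact: ev_zero.
apply: (ev_precS IH).
apply: (ev_comp (ys := [:: m; n * m])); last by rewrite mulSn; exact: addc_ok.
apply: evs_cons; first by apply: (proj_ok (i := 2) (xs := [:: n; n * m; m])).
apply: evs_cons; last exact: evs_nil.
by apply: (proj_ok (i := 1) (xs := [:: n; n * m; m])).
Qed.

Definition powc c := RPrec (cst 1) (RComp mulc [:: RProj 1; cst c]).
Lemma powc_ok c n : reval (powc c) [:: n] (c ^ n).
Proof.
elim: n => [|n IH]; first by apply: ev_prec0; exact: cst_ok.
apply: (ev_precS IH).
apply: (ev_comp (ys := [:: c ^ n; c])); last by rewrite expnSr; exact: mulc_ok.
apply: evs_cons; first exact: (proj_ok (i := 1) (xs := [:: n; c ^ n])).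
apply: evs_cons; last exact: evs_nil.
exact: cst_ok.
Qed.

Fixpoint Tw (n : nat) : nat := if n is n'.+1 then 2 ^ (2 * Tw n') else 1.
Definition Twc := RPrec (cst 1) (RComp (powc 2) [:: RComp mulc [:: cst 2; RProj 1]]).
Lemma Twc_ok n : reval Twc [:: n] (Tw n).
Proof.
elim: n => [|n IH]; first by apply: ev_prec0; exact: cst_ok.
apply: (ev_precS IH).
apply: (ev_comp (ys := [:: 2 * Tw n])); last exact: powc_ok.
apply: evs_cons; last exact: evs_nil.
apply: (ev_comp (ys := [:: 2; Tw n])); last exact: mulc_ok.
apply: evs_cons; first exact: cst_ok.
apply: evs_cons; last exact: evs_nil.
exact: (proj_ok (i := 1) (xs := [:: n; Tw n])).
Qed.

Definition fbound (k : nat) : nat := Tw k.+1 * (3 ^ k * 3 ^ k * 2 ^ k) * k.+1.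

Lemma fbound_computable : computable fbound.
Proof.
exists (RComp mulc [:: RComp mulc [:: RComp Twc [:: RComp RSucc [:: RProj 0]];
          RComp mulc [:: RComp mulc [:: RComp (powc 3) [:: RProj 0]; RComp (powc 3) [:: RProj 0]];
                         RComp (powc 2) [:: RProj 0]]];
        RComp RSucc [:: RProj 0]]) => n.
have P0 : reval (RProj 0) [:: n] n by exact: (proj_ok (i := 0) (xs := [:: n])).
have S0 : reval (RComp RSucc [:: RProj 0]) [:: n] n.+1.
  apply: (ev_comp (ys := [:: n])); last exact: ev_succ.
  by apply: evs_cons => //; exact: evs_nil.
have PW c : reval (RComp (powc c) [:: RProj 0]) [:: n] (c ^ n).
  apply: (ev_comp (ys := [:: n])); last exact: powc_ok.
  by apply: evs_cons => //; exact: evs_nil.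
apply: (ev_comp (ys := [:: Tw n.+1 * (3 ^ n * 3 ^ n * 2 ^ n); n.+1])); last exact: mulc_ok.
apply: evs_cons; last by apply: evs_cons => //; exact: evs_nil.
apply: (ev_comp (ys := [:: Tw n.+1; 3 ^ n * 3 ^ n * 2 ^ n])); last exact: mulc_ok.
apply: evs_cons.
  apply: (ev_comp (ys := [:: n.+1])); last exact: Twc_ok.
  by apply: evs_cons => //; exact: evs_nil.
apply: evs_cons; last exact: evs_nil.
apply: (ev_comp (ys := [:: 3 ^ n * 3 ^ n; 2 ^ n])); last exact: mulc_ok.
apply: evs_cons.
  apply: (ev_comp (ys := [:: 3 ^ n; 3 ^ n])); last exact: mulc_ok.
  apply: evs_cons => //; apply: evs_cons => //; exact: evs_nil.
by apply: evs_cons => //; exact: evs_nil.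
Qed.

Definition pb (P : Prop) : bool := if excluded_middle_informative P then true else false.
Lemma pbP P : reflect P (pb P).
Proof. by rewrite /pb; case: excluded_middle_informative => h; constructor. Qed.

Section Build.
Variables (X : eqType) (D : pred X) (F : (X -> bool) -> Prop) (ds : seq X) (x0 : X) (c : nat).
Hypothesis ds_uniq : uniq ds.
Hypothesis ds_D : forall x, x \in ds -> D x.
Hypothesis F_ds : forall d d', (forall x, x \in ds -> d x = d' x) -> (F d <-> F d').

Definition mixl l (d g : X -> bool) x := if x \in take l ds then d x else g x.
Definition eqvP l d d' := forall g, F (mixl l d g) <-> F (mixl l d' g).

Hypothesis levels : forall l, l <= size ds -> exists (T : finType) (tau : (X -> bool) -> T),
  #|T| <= c /\ forall d d', tau d = tau d' -> eqvP l d d'.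

Local Notation N := (size ds).

Lemma eqvP_refl l d : eqvP l d d. Proof. by []. Qed.
Lemma eqvP_sym l d d' : eqvP l d d' -> eqvP l d' d.
Proof. by move=> h g; split => /h. Qed.
Lemma eqvP_trans l d1 d2 d3 : eqvP l d1 d2 -> eqvP l d2 d3 -> eqvP l d1 d3.
Proof. by move=> h1 h2 g; split => [/h1/h2|/h2/h1]. Qed.

Lemma eqvP_agree l d1 d2 : (forall x, x \in ds -> d1 x = d2 x) -> eqvP l d1 d2.
Proof.
move=> h g; apply: F_ds => x xds; rewrite /mixl.
by case: ifP => // /mem_take /h.
Qed.

Definition setb (d : X -> bool) l b : X -> bool := fun x => if x == nth x0 ds l then b else d x.

Lemma mixl_setb l d g b : l < N ->
  mixl l.+1 (setb d l b) g = mixl l d (setb g l b).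
Proof.
move=> lN; apply: functional_extensionality => x.
rewrite /mixl (take_nth x0 lN) -cats1 mem_cat inE /setb.
have nl : nth x0 ds l \notin take l ds.
  rewrite in_take ?mem_nth // index_uniq //.
  by rewrite ltnn.
case: (boolP (x \in take l ds)) => [xin|xnin] /=.
  by case: eqP => // ex; move: xin; rewrite ex (negbTE nl).
by case: eqP.
Qed.

Lemma eqvP_step l d d' b : l < N -> eqvP l d d' -> eqvP l.+1 (setb d l b) (setb d' l b).
Proof. by move=> lN h g; rewrite !mixl_setb //; apply: h. Qed.

Lemma setb_self l d : setb d l (d (nth x0 ds l)) = d.
Proof. by apply: functional_extensionality => x; rewrite /setb; case: eqP => // ->. Qed.

Definition tf (s : seq bool) : X -> bool := fun x => nth false s (index x ds).
Definition eqv l (s s' : seq bool) := pb (eqvP l (tf s) (tf s')).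

Lemma eqv_refl l s : eqv l s s. Proof. exact/pbP. Qed.
Lemma eqv_sym l s s' : eqv l s s' = eqv l s' s.
Proof. by apply/pbP/pbP => /eqvP_sym. Qed.

Lemma tf_set l s b : l < N -> forall x, x \in ds -> tf (set_nth false s l b) x = setb (tf s) l b x.
Proof.
move=> lN x xds; rewrite /tf /setb nth_set_nth /=.
have -> : (index x ds == l) = (x == nth x0 ds l).
  apply/eqP/eqP => [<-|->]; first by rewrite nth_index.
  by rewrite index_uniq.
by [].
Qed.

Definition dedup l (s : seq (seq bool)) :=
  foldr (fun d acc => if has (eqv l d) acc then acc else d :: acc) [::] s.

Lemma dedup_sub l s x : x \in dedup l s -> x \in s.
Proof.
elim: s => //= a s IH; case: ifP => _.
  by move/IH; rewrite inE orbC => ->.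
by rewrite !inE; case/orP => [->|/IH ->] //; rewrite orbT.
Qed.

Lemma dedup_cov l s x : x \in s -> has (eqv l x) (dedup l s).
Proof.
elim: s => //= a s IH; rewrite inE; case/orP => [/eqP ->|/IH h].
  by case: ifP => // _; rewrite /= eqv_refl.
by case: ifP => // _; rewrite /= h orbT.
Qed.

Lemma dedup_pw l s : pairwise (fun a b => ~~ eqv l a b) (dedup l s).
Proof.
elim: s => //= a s IH; case: ifP => // hn.
rewrite pairwise_cons IH andbT; apply/allP => y yin.
by apply/negP => e; move/negP: hn; apply; apply/hasP; exists y.
Qed.

Definition cand l (s : seq (seq bool)) :=
  flatten [seq [:: set_nth false d l false; set_nth false d l true] | d <- s].

Fixpoint reps l := if l is l'.+1 then dedup l (cand l' (reps l')) else [:: nseq N false].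

Lemma reps_pw l : pairwise (fun a b => ~~ eqv l a b) (reps l).
Proof. by case: l => [|l] //=; exact: dedup_pw. Qed.

Lemma cand_mem l s d b : d \in s -> set_nth false d l b \in cand l s.
Proof.
move=> ds'; apply/flattenP; exists [:: set_nth false d l false; set_nth false d l true].
  by apply/mapP; exists d.
by case: b; rewrite !inE eqxx ?orbT.
Qed.

Lemma cand_inv l s x : x \in cand l s -> exists2 d, d \in s & exists b, x = set_nth false d l b.
Proof.
case/flattenP => y /mapP [d dins ->]; rewrite !inE => /orP [] /eqP ->; exists d => //.
  by exists false.
by exists true.
Qed.

Lemma size_pw l s : l <= N -> pairwise (fun a b => ~~ eqv l a b) s -> size s <= c.
Proof.
move=> lN pw; have [T [tau [Tc Htau]]] := levels lN.
apply: leq_trans Tc.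
have u : uniq [seq tau (tf a) | a <- s].
  elim: s pw => //= a s IH; move=> /andP [ha pw].
  rewrite IH // andbT; apply/negP => /mapP [b bin eb].
  have := allP ha b bin; rewrite /eqv.
  by move/negP; apply; apply/pbP; apply: Htau.
rewrite -(size_map (fun a => tau (tf a))) -(card_uniqP u).
exact: max_card.
Qed.

Lemma size_reps l : l <= N -> size (reps l) <= c.
Proof. by move=> lN; apply: size_pw lN (reps_pw l). Qed.

Definition L : seq (nat * seq bool) :=
  flatten [seq [seq (l, d) | d <- reps l] | l <- iota 0 N.+1].

Lemma L_mem l s : ((l, s) \in L) = (l <= N) && (s \in reps l).
Proof.
apply/flattenP/andP => [[y /mapP [l' l'in ->] /mapP [d din [-> ->]]]|[lN sin]].
  by move: l'in; rewrite mem_iota add0n ltnS /= => ->.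
exists [seq (l, d) | d <- reps l]; last by apply/mapP; exists s.
by apply/mapP; exists l => //; rewrite mem_iota add0n ltnS.
Qed.

Lemma L_memq q : q \in L -> q.2 \in reps q.1.
Proof. by case: q => l s; rewrite L_mem => /andP []. Qed.

Definition r2 (q q' : nat * seq bool) := (q.1 != q'.1) || ~~ eqv q.1 q.2 q'.2.

Lemma L_pw : pairwise r2 L.
Proof.
rewrite /L; have : uniq (iota 0 N.+1) by exact: iota_uniq.
elim: (iota 0 N.+1) => //= a ls IH /andP [ains u].
rewrite pairwise_cat IH // andbT; apply/andP; split.
  apply/allrelP => q q' /mapP [d _ ->] /flattenP [y /mapP [l lin ->] /mapP [d' _ ->]].
  by rewrite /r2 /=; case: eqP => // eal; rewrite eal lin in ains.
rewrite pairwise_map; apply: sub_pairwise (reps_pw a) => x y /=.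
by rewrite /r2 /= eqxx.
Qed.

Lemma size_flat_gen (s : seq nat) : (forall l, l \in s -> size (reps l) <= c) ->
  size (flatten [seq [seq (l, d) | d <- reps l] | l <- s]) <= size s * c.
Proof.
elim: s => //= a ls IH h.
rewrite size_cat size_map mulSn leq_add ?h ?inE ?eqxx //.
by apply: IH => l lin; apply: h; rewrite inE lin orbT.
Qed.

Lemma size_L : size L <= c * N.+1.
Proof.
rewrite /L mulnC -{2}(size_iota 0 N.+1); apply: size_flat_gen.
by move=> l; rewrite mem_iota add0n ltnS; exact: size_reps.
Qed.

Lemma L_gt0 : 0 < size L.
Proof. by rewrite /L /=. Qed.

Definition q0 : nat * seq bool := (0, [::]).

Lemma L_nth0 : nth q0 L 0 = (0, nseq N false).
Proof. by []. Qed.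

Lemma L_uniq_pos i j : i < size L -> j < size L ->
  (nth q0 L i).1 = (nth q0 L j).1 ->
  eqv (nth q0 L i).1 (nth q0 L i).2 (nth q0 L j).2 -> i = j.
Proof.
move=> il jl el ev; have := L_pw; move/(pairwiseP q0) => pw.
case: (ltngtP i j) => // ij.
  by have := pw i j il jl ij; rewrite /r2 el eqxx /= -el ev.
have := pw j i jl il ij; rewrite /r2 el eqxx /= eqv_sym -el ev //.
Qed.

Lemma nth_L_mem i : i < size L -> nth q0 L i \in L.
Proof. exact: mem_nth. Qed.

Definition r0 : 'I_(size L) := Ordinal L_gt0.

Definition chP (q : nat * seq bool) b := fun q' : nat * seq bool =>
  (q'.1 == q.1.+1) && eqv q.1.+1 q'.2 (set_nth false q.2 q.1 b).

Definition ch (q : nat * seq bool) b : 'I_(size L) := insubd r0 (find (chP q b) L).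

Definition nodef (i : 'I_(size L)) : bdd_node X (size L) :=
  let q := nth q0 L i in
  if q.1 < N then BDec (nth x0 ds q.1) (ch q false) (ch q true)
  else BLeaf X (size L) (pb (F (tf q.2))).

Definition Bobdd : obdd X := @OBDD X (size L) r0 nodef ds.

Lemma ch_has q b : q \in L -> q.1 < N -> has (chP q b) L.
Proof.
case: q => l s; rewrite L_mem => /andP [_ sin] lN.
have := dedup_cov (l.+1) (cand_mem l b sin) => /hasP [s' s'in e].
apply/hasP; exists (l.+1, s'); first by rewrite L_mem lN.
by rewrite /chP /= eqxx eqv_sym.
Qed.

Lemma ch_spec q b : q \in L -> q.1 < N ->
  [/\ val (ch q b) < size L, (nth q0 L (ch q b)).1 = q.1.+1 &
      eqv q.1.+1 (nth q0 L (ch q b)).2 (set_nth false q.2 q.1 b)].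
Proof.
move=> qL lN; have h := ch_has b qL lN.
have fl : find (chP q b) L < size L by rewrite -has_find.
have e : nat_of_ord (insubd r0 (find (chP q b) L)) = find (chP q b) L by rewrite val_insubd fl.
rewrite /ch e; have := nth_find q0 h => /andP [/eqP -> e2].
by split => //; rewrite val_insubd fl.
Qed.

Lemma L_lev q : q \in L -> q.1 <= N.
Proof. by case: q => l s; rewrite L_mem => /andP []. Qed.

Lemma wf_B : wf_obdd Bobdd D.
Proof.
split; first exact: ds_uniq.
split.
  move=> i x; rewrite /var_of /= /nodef; case: ifP => // lN [<-].
  by have m := mem_nth x0 lN; split => //; apply: ds_D.
split.
  move=> i; rewrite /is_child /= /nodef; case: ifP => // lN.
  have iL := nth_L_mem (ltn_ord i).
  apply/negP => /orP [] /eqP e.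
    by have [_ + _] := ch_spec false iL lN; rewrite -e (_ : nat_of_ord (oroot Bobdd) = 0) // L_nth0.
  by have [_ + _] := ch_spec true iL lN; rewrite -e (_ : nat_of_ord (oroot Bobdd) = 0) // L_nth0.
split.
  move=> j jr; set q := nth q0 L j.
  have jL : q \in L := nth_L_mem (ltn_ord j).
  case ql : q.1 => [|l'].
    have e : val j = 0.
      apply: (@L_uniq_pos j 0 (ltn_ord j) L_gt0); rewrite -/q L_nth0 ql //.
      have : q.2 \in reps 0 by rewrite -ql; apply: L_memq.
      by rewrite inE => /eqP ->; exact: eqv_refl.
    by case/eqP: jr; apply: val_inj.
  have : q.2 \in reps l'.+1 by rewrite -ql; apply: L_memq.
  move=> /dedup_sub /cand_inv [s' s'in [b eb]].
  have lN : l'.+1 <= N by have := L_lev jL; rewrite ql.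
  have pL : (l', s') \in L by rewrite L_mem (ltnW lN).
  have pi : index (l', s') L < size L by rewrite index_mem.
  exists (Ordinal pi); rewrite /is_child /= /nodef nth_index //= lN.
  have [k1 k2 k3] := ch_spec b pL lN.
  suff ek : nat_of_ord (ch (l', s') b) = nat_of_ord j.
    by case: b {eb k1 k2 k3} ek => ek; rewrite (val_inj ek) eqxx ?orbT.
  apply: L_uniq_pos => //; first by rewrite k2 -/q ql.
  by rewrite k2 /= -/q eb; exact: k3.
move=> i j x y; rewrite /is_child /var_of /= /nodef.
case: ifP => // lN hc [<-]; case: ifP => // lN' [<-].
have iL := nth_L_mem (ltn_ord i).
have ej : (nth q0 L j).1 = (nth q0 L i).1.+1.
  by case/orP: hc => /eqP ->; [have [_ -> _] := ch_spec false iL lN | have [_ -> _] := ch_spec true iL lN].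
by rewrite !index_uniq //; exact: (eq_leq (esym ej)).
Qed.

Lemma reach_ok delta n (i : 'I_(size L)) :
  N - (nth q0 L i).1 = n -> eqvP (nth q0 L i).1 (tf (nth q0 L i).2) delta ->
  @reaches X Bobdd delta i (pb (F delta)).
Proof.
elim: n i => [|n IH] i hn he.
  have iL := nth_L_mem (ltn_ord i).
  have lev := L_lev iL.
  have eN : (nth q0 L i).1 = N by apply/eqP; rewrite eqn_leq lev -subn_eq0 hn.
  apply: reach_leaf; rewrite /= /nodef eN ltnn; congr BLeaf.
  have h1 : forall d g, F (mixl N d g) <-> F d.
    by move=> d g; apply: F_ds => x xds; rewrite /mixl take_size xds.
  move: he; rewrite eN => he.
  apply/pbP/pbP => [/(h1 _ (fun _ => false))/he/h1|/(h1 _ (fun _ => false))/he/h1] //.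
have iL := nth_L_mem (ltn_ord i).
set q := nth q0 L i in hn he iL.
have lN : q.1 < N by rewrite -subn_gt0 hn.
apply: (@reach_dec _ Bobdd delta i (nth x0 ds q.1) (ch q false) (ch q true)).
  by rewrite /= /nodef -/q lN.
set b := delta (nth x0 ds q.1).
have -> : (if b then ch q true else ch q false) = ch q b by case: (b).
have [k1 k2 k3] := ch_spec b iL lN.
apply: IH; first by rewrite k2 subnS hn.
rewrite k2; move/pbP: k3 => k3; apply: (eqvP_trans k3).
apply: (@eqvP_trans _ _ (setb (tf q.2) q.1 b)).
  by apply: eqvP_agree => x xds; apply: tf_set.
rewrite -[X in eqvP _ _ X](setb_self q.1 delta); exact: eqvP_step.
Qed.

Lemma build_ok : obdd_computes Bobdd D F.
Proof.
split; first exact: wf_B.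
move=> delta; exists (pb (F delta)); split.
  apply: (@reach_ok delta (N - 0) r0) => //= g.
  by rewrite /mixl take0.
by split => [/pbP|/pbP].
Qed.

End Build.

Lemma obdd_build (X : eqType) (D : pred X) (F : (X -> bool) -> Prop) (ds : seq X) (x0 : X) (c : nat) :
  uniq ds -> (forall x, x \in ds -> D x) ->
  (forall d d', (forall x, x \in ds -> d x = d' x) -> (F d <-> F d')) ->
  (forall l, l <= size ds -> exists (T : finType) (tau : (X -> bool) -> T),
     #|T| <= c /\ forall d d', tau d = tau d' -> eqvP F ds l d d') ->
  exists B : obdd X, obdd_computes B D F /\ osize B <= c * (size ds).+1.
Proof.
move=> u hD hF hl; exists (Bobdd F ds x0); split; first exact: build_ok.
exact: size_L hl.
Qed.


Section Coinc.
Variables (V E : finType) (src dst : E -> V).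

Lemma msat_coinc p : forall aV aE aVS aES aV' aE' aVS' aES',
  (forall z, freeV p z -> aV z = aV' z) -> (forall z, freeE p z -> aE z = aE' z) ->
  (forall z, freeVS p z -> aVS z = aVS' z) -> (forall z, freeES p z -> aES z = aES' z) ->
  msat src dst aV aE aVS aES p = msat src dst aV' aE' aVS' aES' p.
Proof.
elim: p => [x y|x y|x y|x X|x X|q IH|q IHq r IHr|x q IH|x q IH|X q IH|X q IH]
  aV aE aVS aES aV' aE' aVS' aES' hV hE hVS hES /=.
- by rewrite (hV x (eqxx _)) (hE y (eqxx _)).
- by rewrite (hV x) /= ?eqxx // (hV y) /= ?eqxx ?orbT.
- by rewrite (hE x) /= ?eqxx // (hE y) /= ?eqxx ?orbT.
- by rewrite (hV x (eqxx _)) (hVS X (eqxx _)).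
- by rewrite (hE x (eqxx _)) (hES X (eqxx _)).
- by rewrite (IH _ _ _ _ aV' aE' aVS' aES').
- congr (_ && _); [apply: IHq | apply: IHr] => z hz;
  (first [apply: hV | apply: hE | apply: hVS | apply: hES]); by rewrite /= hz ?orbT.
- apply: eq_existsb => v; apply: IH => // z hz; rewrite /upd; case: eqP => // nz.
  by apply: hV; rewrite /= hz andbT; apply/eqP => e; apply: nz.
- apply: eq_existsb => v; apply: IH => // z hz; rewrite /upd; case: eqP => // nz.
  by apply: hE; rewrite /= hz andbT; apply/eqP => e; apply: nz.
- apply: eq_existsb => v; apply: IH => // z hz; rewrite /upd; case: eqP => // nz.
  by apply: hVS; rewrite /= hz andbT; apply/eqP => e; apply: nz.
- apply: eq_existsb => v; apply: IH => // z hz; rewrite /upd; case: eqP => // nz.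
  by apply: hES; rewrite /= hz andbT; apply/eqP => e; apply: nz.
Qed.
End Coinc.

Fixpoint nb (p : mso2) : nat :=
  match p with
  | FAdj x y | FEqV x y | FEqE x y | FInV x y | FInE x y => (maxn x y).+1
  | FNeg q => nb q
  | FAnd q r => maxn (nb q) (nb r)
  | FExV _ q | FExE _ q | FExVS _ q | FExES _ q => nb q
  end.

Lemma nb_free p z : freeV p z || freeE p z || freeVS p z || freeES p z -> z < nb p.
Proof.
elim: p => [x y|x y|x y|x X|x X|q IH|q IHq r IHr|x q IH|x q IH|X q IH|X q IH] /=;
  rewrite ?orbF ?orFb.
- by case/orP => /eqP <-; lia.
- by case/orP => /eqP <-; lia.
- by case/orP => /eqP <-; lia.
- by case/orP => /eqP <-; lia.
- by case/orP => /eqP <-; lia.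
- exact: IH.
- move=> h.
  have : (freeV q z || freeE q z || freeVS q z || freeES q z) ||
         (freeV r z || freeE r z || freeVS r z || freeES r z).
    by move: h; case: (freeV q z); case: (freeE q z); case: (freeVS q z); case: (freeES q z);
      case: (freeV r z); case: (freeE r z); case: (freeVS r z); case: (freeES r z).
  by case/orP => [/IHq|/IHr]; lia.
- by move=> h; apply: IH; move: h; case: (x != z); case: (freeV q z); case: (freeE q z); case: (freeVS q z); case: (freeES q z).
- by move=> h; apply: IH; move: h; case: (x != z); case: (freeV q z); case: (freeE q z); case: (freeVS q z); case: (freeES q z).
- by move=> h; apply: IH; move: h; case: (X != z); case: (freeV q z); case: (freeE q z); case: (freeVS q z); case: (freeES q z).
- by move=> h; apply: IH; move: h; case: (X != z); case: (freeV q z); case: (freeE q z); case: (freeVS q z); case: (freeES q z).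
Qed.

Lemma count_eq1 (s : seq nat) x : uniq s -> count (fun z => x == z) s <= 1.
Proof.
move=> u; rewrite (eq_count (a2 := pred1 x)); last by move=> z; rewrite /= eq_sym.
by rewrite count_uniq_mem //; case: (x \in s).
Qed.

Lemma count_or (s : seq nat) (a1 a2 : pred nat) : count (fun z => a1 z || a2 z) s <= count a1 s + count a2 s.
Proof. by rewrite -(count_predUI a1 a2); apply: leq_addr. Qed.

Lemma count_andl (s : seq nat) (a1 a2 : pred nat) : count (fun z => a1 z && a2 z) s <= count a2 s.
Proof. by apply: sub_count => z /andP []. Qed.

Lemma count_freeV p s : uniq s -> count (freeV p) s + count (freeVS p) s <= msize p.
Proof.
move=> u; elim: p => [x y|x y|x y|x X|x X|q IH|q IHq r IHr|x q IH|x q IH|X q IH|X q IH] /=.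
- rewrite count_pred0 addn0; exact: leq_trans (count_eq1 x u) _.
- rewrite count_pred0 addn0; apply: leq_trans (count_or s _ _) _.
  exact: leq_trans (leq_add (count_eq1 x u) (count_eq1 y u)) _.
- by rewrite !count_pred0.
- exact: leq_trans (leq_add (count_eq1 x u) (count_eq1 X u)) _.
- by rewrite !count_pred0.
- exact: leq_trans IH _.
- apply: leq_trans (leq_add (count_or s (freeV q) (freeV r)) (count_or s (freeVS q) (freeVS r))) _.
  rewrite addnACA; exact: leq_trans (leq_add IHq IHr) _.
- apply: leq_trans (leq_add (count_andl s (fun z => x != z) (freeV q)) (leqnn _)) _.
  exact: leq_trans IH _.
- exact: leq_trans IH _.
- apply: leq_trans (leq_add (leqnn _) (count_andl s (fun z => X != z) (freeVS q))) _.
  exact: leq_trans IH _.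
- exact: leq_trans IH _.
Qed.

Lemma count_freeE p s : uniq s -> count (freeE p) s + count (freeES p) s <= msize p.
Proof.
move=> u; elim: p => [x y|x y|x y|x X|x X|q IH|q IHq r IHr|x q IH|x q IH|X q IH|X q IH] /=.
- rewrite count_pred0 addn0; exact: leq_trans (count_eq1 y u) _.
- by rewrite !count_pred0.
- rewrite count_pred0 addn0; apply: leq_trans (count_or s _ _) _.
  exact: leq_trans (leq_add (count_eq1 x u) (count_eq1 y u)) _.
- by rewrite !count_pred0.
- exact: leq_trans (leq_add (count_eq1 x u) (count_eq1 X u)) _.
- exact: leq_trans IH _.
- apply: leq_trans (leq_add (count_or s (freeE q) (freeE r)) (count_or s (freeES q) (freeES r))) _.
  rewrite addnACA; exact: leq_trans (leq_add IHq IHr) _.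
- exact: leq_trans IH _.
- apply: leq_trans (leq_add (count_andl s (fun z => x != z) (freeE q)) (leqnn _)) _.
  exact: leq_trans IH _.
- exact: leq_trans IH _.
- apply: leq_trans (leq_add (leqnn _) (count_andl s (fun z => X != z) (freeES q))) _.
  exact: leq_trans IH _.
Qed.

Lemma idx_eq (T : finType) (S : {set T}) u u' :
  index u (enum S) = index u' (enum S) -> u \in S -> u = u'.
Proof.
move=> e uS.
have h : index u' (enum S) < size (enum S) by rewrite -e index_mem mem_enum.
have u'S : u' \in enum S by rewrite -index_mem.
have uS' : u \in enum S by rewrite mem_enum.
by rewrite -(nth_index u uS') e nth_index.
Qed.

Section Cut.
Variables (V E : finType) (src dst : E -> V) (PV : pred V) (PE : pred E) (b : nat).
Definition B1 : {set V} := [set v | PV v && [exists e, ~~ PE e && incident src dst v e]].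
Definition B2 : {set V} := [set v | ~~ PV v && [exists e, PE e && incident src dst v e]].
Hypothesis hB1 : #|B1| <= b.
Hypothesis hB2 : #|B2| <= b.

Record asg := Asg { aV : nat -> option V; aE : nat -> option E;
                    aVS : nat -> {set V}; aES : nat -> {set E} }.
Definition sat (a : asg) p := msat src dst (aV a) (aE a) (aVS a) (aES a) p.
Definition pV (o : option V) := if o is Some v then (if PV v then Some v else None) else None.
Definition qV (o : option V) := if o is Some v then (if PV v then None else Some v) else None.
Definition pE (o : option E) := if o is Some v then (if PE v then Some v else None) else None.
Definition qE (o : option E) := if o is Some v then (if PE v then None else Some v) else None.
Definition glV (x y : option V) := if pV x is Some v then Some v else qV y.
Definition glE (x y : option E) := if pE x is Some v then Some v else qE y.
Definition PVs : {set V} := [set v | PV v].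
Definition PEs : {set E} := [set e | PE e].
Definition glue (a c : asg) := Asg (fun z => glV (aV a z) (aV c z)) (fun z => glE (aE a z) (aE c z))
  (fun z => (aVS a z :&: PVs) :|: (aVS c z :\: PVs)) (fun z => (aES a z :&: PEs) :|: (aES c z :\: PEs)).

Definition updV (a : asg) x o := Asg (upd (aV a) x o) (aE a) (aVS a) (aES a).
Definition updE (a : asg) x o := Asg (aV a) (upd (aE a) x o) (aVS a) (aES a).
Definition updVS (a : asg) x S := Asg (aV a) (aE a) (upd (aVS a) x S) (aES a).
Definition updES (a : asg) x S := Asg (aV a) (aE a) (aVS a) (upd (aES a) x S).

Definition atb := 8 * b.+1 ^ 3.
Fixpoint gb p := match p with
 | FAdj _ _ | FEqV _ _ | FEqE _ _ | FInV _ _ | FInE _ _ => atb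
 | FNeg q => gb q
 | FAnd q r => gb q * gb r
 | FExV _ q | FExE _ q => 2 ^ gb q * gb q
 | FExVS _ q | FExES _ q => 2 ^ gb q end.

Definition Res (T : finType) (tau : asg -> T) p :=
  forall a a', tau a = tau a' -> forall c, sat (glue a c) p = sat (glue a' c) p.

Definition Claim p := exists (T : finType) (tau : asg -> T), #|T| <= gb p /\ Res tau p.

Lemma pV_P o v : pV o = Some v -> PV v.
Proof. by case: o => //= w; case: ifP => // h [<-]. Qed.
Lemma qV_P o v : qV o = Some v -> ~~ PV v.
Proof. by case: o => //= w; case: ifP => // h [<-]; rewrite h. Qed.
Lemma pE_P o v : pE o = Some v -> PE v.
Proof. by case: o => //= w; case: ifP => // h [<-]. Qed.
Lemma qE_P o v : qE o = Some v -> ~~ PE v.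
Proof. by case: o => //= w; case: ifP => // h [<-]; rewrite h. Qed.

Lemma atb_ge8 : 8 <= atb.
Proof. by rewrite /atb leq_pmulr // expn_gt0. Qed.

Lemma idx_le (S : {set V}) v : #|S| <= b -> index v (enum S) < b.+1.
Proof. by move=> h; rewrite ltnS; apply: leq_trans (index_size _ _) _; rewrite -cardE. Qed.

Lemma inord_idx (S : {set V}) v v' : #|S| <= b ->
  (inord (index v (enum S)) : 'I_b.+1) = inord (index v' (enum S)) ->
  index v (enum S) = index v' (enum S).
Proof.
move=> h /(congr1 val); rewrite /= !inordK //; exact: idx_le.
Qed.

Lemma B1_inc v v' e : PV v -> PV v' -> index v (enum B1) = index v' (enum B1) -> ~~ PE e ->
  incident src dst v e = incident src dst v' e.
Proof.
move=> pv pv' ei ne.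
have key : forall u u', PV u -> index u (enum B1) = index u' (enum B1) ->
    incident src dst u e -> u = u'.
  move=> u u' pu eu iu; apply: idx_eq eu _.
  by rewrite inE pu /=; apply/existsP; exists e; rewrite ne.
case h: (incident src dst v e).
  by have e1 := key v v' pv ei h; rewrite -e1 h.
case h': (incident src dst v' e) => //.
by have e1 := key v' v pv' (esym ei) h'; rewrite e1 h in h'.
Qed.

Lemma B2_inc e e' v : PE e -> PE e' ->
  index (src e) (enum B2) = index (src e') (enum B2) ->
  index (dst e) (enum B2) = index (dst e') (enum B2) -> ~~ PV v ->
  incident src dst v e = incident src dst v e'.
Proof.
move=> pe pe' es ed nv.
have inB : forall f u, PE f -> ~~ PV u -> incident src dst u f -> u \in B2.
  by move=> f u pf nu iu; rewrite inE nu /=; apply/existsP; exists f; rewrite pf.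
rewrite /incident.
have -> : (v == src e) = (v == src e').
  apply/eqP/eqP => [ev|ev]; subst v.
    by apply: idx_eq es _; apply: (inB e) => //; rewrite /incident eqxx.
  by apply: (idx_eq (esym es)); apply: (inB e') => //; rewrite /incident eqxx.
have -> : (v == dst e) = (v == dst e').
  apply/eqP/eqP => [ev|ev]; subst v.
    by apply: idx_eq ed _; apply: (inB e) => //; rewrite /incident eqxx orbT.
  by apply: (idx_eq (esym ed)); apply: (inB e') => //; rewrite /incident eqxx orbT.
by [].
Qed.

Definition adjv (ov : option V) (oe : option E) :=
  if ov is Some v then (if oe is Some e then incident src dst v e else false) else false.

Lemma adj_help (ox ox' qx : option V) (oy oy' qy : option E) :
 (forall v, ox = Some v -> PV v) -> (forall v, ox' = Some v -> PV v) ->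
 (forall e, oy = Some e -> PE e) -> (forall e, oy' = Some e -> PE e) ->
 (forall v, qx = Some v -> ~~ PV v) -> (forall e, qy = Some e -> ~~ PE e) ->
 (ox == None) = (ox' == None) -> (oy == None) = (oy' == None) -> adjv ox oy = adjv ox' oy' ->
 (if ox is Some v then inord (index v (enum B1)) else ord0 : 'I_b.+1) =
   (if ox' is Some v then inord (index v (enum B1)) else ord0) ->
 (if oy is Some e then inord (index (src e) (enum B2)) else ord0 : 'I_b.+1) =
   (if oy' is Some e then inord (index (src e) (enum B2)) else ord0) ->
 (if oy is Some e then inord (index (dst e) (enum B2)) else ord0 : 'I_b.+1) =
   (if oy' is Some e then inord (index (dst e) (enum B2)) else ord0) ->
 adjv (if ox is Some v then Some v else qx) (if oy is Some e then Some e else qy) =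
 adjv (if ox' is Some v then Some v else qx) (if oy' is Some e then Some e else qy).
Proof.
case: ox => [v|]; case: ox' => [v'|] //= pv pv'; case: oy => [e|]; case: oy' => [e'|] //=
  pe pe' nqx nqy _ _ hb hi hs hd //.
- case: qy nqy => [f|] //= nqy; apply: B1_inc.
  + exact: pv.
  + exact: pv'.
  + exact: inord_idx hB1 hi.
  + exact: nqy.
- case: qx nqx => [u|] //= nqx; apply: B2_inc.
  + exact: pe.
  + exact: pe'.
  + exact: inord_idx hB2 hs.
  + exact: inord_idx hB2 hd.
  + exact: nqx.
Qed.

Lemma claim_Adj x y : Claim (FAdj x y).
Proof.
eexists; exists (fun a : asg => (pV (aV a x) == None, pE (aE a y) == None,
   adjv (pV (aV a x)) (pE (aE a y)),
   (if pV (aV a x) is Some v then inord (index v (enum B1)) else ord0 : 'I_b.+1),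
   (if pE (aE a y) is Some e then inord (index (src e) (enum B2)) else ord0 : 'I_b.+1),
   (if pE (aE a y) is Some e then inord (index (dst e) (enum B2)) else ord0 : 'I_b.+1))).
split.
  rewrite !card_prod !card_bool !card_ord /= /atb !expnS expn0; nia.
move=> a a' [h1 h2 h3 h4 h5 h6] c; rewrite /sat /= /glV /glE.
apply: adj_help => //.
- exact: pV_P.
- exact: pV_P.
- exact: pE_P.
- exact: pE_P.
- exact: qV_P.
- exact: qE_P.
Qed.

Definition eqo (T : eqType) (o1 o2 : option T) :=
  if o1 is Some u then (if o2 is Some w then u == w else false) else false.

Lemma eq_help (T : finType) (P : pred T) (ox ox' qx oy oy' qy : option T) :
 (forall v, ox = Some v -> P v) -> (forall v, ox' = Some v -> P v) ->
 (forall v, oy = Some v -> P v) -> (forall v, oy' = Some v -> P v) ->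
 (forall v, qx = Some v -> ~~ P v) -> (forall v, qy = Some v -> ~~ P v) ->
 (ox == None) = (ox' == None) -> (oy == None) = (oy' == None) -> eqo ox oy = eqo ox' oy' ->
 eqo (if ox is Some v then Some v else qx) (if oy is Some e then Some e else qy) =
 eqo (if ox' is Some v then Some v else qx) (if oy' is Some e then Some e else qy).
Proof.
case: ox => [v|]; case: ox' => [v'|] //= pv pv'; case: oy => [e|]; case: oy' => [e'|] //=
  pe pe' nqx nqy _ _ hb //.
- case: qy nqy => [w|] //= nqy.
  have nw := nqy w erefl.
  have -> : (v == w) = false by apply/eqP => ew; move: nw; rewrite -ew (pv v erefl).
  have -> : (v' == w) = false by apply/eqP => ew; move: nw; rewrite -ew (pv' v' erefl).
  by [].
- case: qx nqx => [w|] //= nqx.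
  have nw := nqx w erefl.
  have -> : (w == e) = false by apply/eqP => ew; move: nw; rewrite ew (pe e erefl).
  have -> : (w == e') = false by apply/eqP => ew; move: nw; rewrite ew (pe' e' erefl).
  by [].
Qed.

Lemma in_help (T : finType) (P : pred T) (ox ox' qx : option T) (S S' Sc : {set T}) :
 (forall v, ox = Some v -> P v) -> (forall v, ox' = Some v -> P v) ->
 (forall v, qx = Some v -> ~~ P v) ->
 (ox == None) = (ox' == None) ->
 (if ox is Some v then v \in S else false) = (if ox' is Some v then v \in S' else false) ->
 (if (if ox is Some v then Some v else qx) is Some v then v \in (S :&: [set t | P t]) :|: (Sc :\: [set t | P t]) else false) =
 (if (if ox' is Some v then Some v else qx) is Some v then v \in (S' :&: [set t | P t]) :|: (Sc :\: [set t | P t]) else false).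
Proof.
case: ox => [v|]; case: ox' => [v'|] //= pv pv' nqx _ hb.
  by rewrite !inE (pv v erefl) (pv' v' erefl) !andbT /= !orbF.
case: qx nqx => [w|] //= nqx.
by rewrite !inE (negbTE (nqx w erefl)) !andbF /=.
Qed.

Lemma claim_EqV x y : Claim (FEqV x y).
Proof.
eexists; exists (fun a : asg => (pV (aV a x) == None, pV (aV a y) == None,
   eqo (pV (aV a x)) (pV (aV a y)))).
split; first by rewrite !card_prod !card_bool /=; exact: atb_ge8.
move=> a a' [h1 h2 h3] c; rewrite /sat /= /glV.
apply: (@eq_help _ PV) => //; by [exact: pV_P | exact: qV_P].
Qed.

Lemma claim_EqE x y : Claim (FEqE x y).
Proof.
eexists; exists (fun a : asg => (pE (aE a x) == None, pE (aE a y) == None,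
   eqo (pE (aE a x)) (pE (aE a y)))).
split; first by rewrite !card_prod !card_bool /=; exact: atb_ge8.
move=> a a' [h1 h2 h3] c; rewrite /sat /= /glE.
apply: (@eq_help _ PE) => //; by [exact: pE_P | exact: qE_P].
Qed.

Lemma claim_InV x X : Claim (FInV x X).
Proof.
eexists; exists (fun a : asg => (pV (aV a x) == None,
   if pV (aV a x) is Some v then v \in aVS a X else false)).
split; first by rewrite !card_prod !card_bool /=; apply: leq_trans atb_ge8.
move=> a a' [h1 h2] c; rewrite /sat /= /glV.
apply: (@in_help _ PV) => //; by [exact: pV_P | exact: qV_P].
Qed.

Lemma claim_InE x X : Claim (FInE x X).
Proof.
eexists; exists (fun a : asg => (pE (aE a x) == None,
   if pE (aE a x) is Some v then v \in aES a X else false)).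
split; first by rewrite !card_prod !card_bool /=; apply: leq_trans atb_ge8.
move=> a a' [h1 h2] c; rewrite /sat /= /glE.
apply: (@in_help _ PE) => //; by [exact: pE_P | exact: qE_P].
Qed.

Lemma claim_Neg q : Claim q -> Claim (FNeg q).
Proof.
move=> [T [tau [hT hR]]]; exists T, tau; split => // a a' e c.
by have := hR a a' e c; rewrite /sat /= => ->.
Qed.

Lemma claim_And q r : Claim q -> Claim r -> Claim (FAnd q r).
Proof.
move=> [T1 [tau1 [hT1 hR1]]] [T2 [tau2 [hT2 hR2]]].
eexists; exists (fun a => (tau1 a, tau2 a)); split.
  by rewrite card_prod /=; apply: leq_mul.
move=> a a' [e1 e2] c.
by have := hR1 a a' e1 c; have := hR2 a a' e2 c; rewrite /sat /= => -> ->.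
Qed.

Lemma LV1 a c x v : PV v ->
  upd (aV (glue a c)) x (Some v) = aV (glue (updV a x (Some v)) c).
Proof.
move=> pv; apply: functional_extensionality => z; rewrite /= /upd.
by case: eqP => _ //; rewrite /glV /= pv.
Qed.

Lemma LV2 a c x v : ~~ PV v ->
  upd (aV (glue a c)) x (Some v) = aV (glue (updV a x None) (updV c x (Some v))).
Proof.
move=> pv; apply: functional_extensionality => z; rewrite /= /upd.
by case: eqP => _ //; rewrite /glV /= (negbTE pv).
Qed.

Lemma LE1 a c x v : PE v ->
  upd (aE (glue a c)) x (Some v) = aE (glue (updE a x (Some v)) c).
Proof.
move=> pv; apply: functional_extensionality => z; rewrite /= /upd.
by case: eqP => _ //; rewrite /glE /= pv.
Qed.

Lemma LE2 a c x v : ~~ PE v ->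
  upd (aE (glue a c)) x (Some v) = aE (glue (updE a x None) (updE c x (Some v))).
Proof.
move=> pv; apply: functional_extensionality => z; rewrite /= /upd.
by case: eqP => _ //; rewrite /glE /= (negbTE pv).
Qed.

Lemma sat_ExV a x q : sat a (FExV x q) = [exists v, msat src dst (upd (aV a) x (Some v)) (aE a) (aVS a) (aES a) q].
Proof. by []. Qed.
Lemma sat_ExE a x q : sat a (FExE x q) = [exists v, msat src dst (aV a) (upd (aE a) x (Some v)) (aVS a) (aES a) q].
Proof. by []. Qed.
Lemma sat_ExVS a x q : sat a (FExVS x q) = [exists S, msat src dst (aV a) (aE a) (upd (aVS a) x S) (aES a) q].
Proof. by []. Qed.
Lemma sat_ExES a x q : sat a (FExES x q) = [exists S, msat src dst (aV a) (aE a) (aVS a) (upd (aES a) x S) q].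
Proof. by []. Qed.

Lemma claim_ExV x q : Claim q -> Claim (FExV x q).
Proof.
move=> [T1 [tau1 [hT1 hR1]]].
eexists; exists (fun a => ([ffun t => [exists v, PV v && (tau1 (updV a x (Some v)) == t)]],
                         tau1 (updV a x None))); split.
  rewrite card_prod card_ffun card_bool /=; apply: leq_mul => //.
  by rewrite leq_exp2l.
have key : forall a a', ([ffun t => [exists v, PV v && (tau1 (updV a x (Some v)) == t)]],
                         tau1 (updV a x None)) =
                        ([ffun t => [exists v, PV v && (tau1 (updV a' x (Some v)) == t)]],
                         tau1 (updV a' x None)) ->
   forall c, sat (glue a c) (FExV x q) -> sat (glue a' c) (FExV x q).
  move=> a a' [hf hn] c; rewrite !sat_ExV => /existsP [v hv]; apply/existsP.
  case pv: (PV v).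
    have s1 : sat (glue (updV a x (Some v)) c) q by move: hv; rewrite (LV1 _ _ _ pv).
    have := congr1 (fun f : {ffun T1 -> bool} => f (tau1 (updV a x (Some v)))) hf; rewrite !ffunE.
    have -> : [exists v0, PV v0 && (tau1 (updV a x (Some v0)) == tau1 (updV a x (Some v)))].
      by apply/existsP; exists v; rewrite pv eqxx.
    move/esym/existsP => [v' /andP [pv' /eqP ev']].
    have s2 : sat (glue (updV a' x (Some v')) c) q by rewrite (hR1 _ _ ev').
    by exists v'; rewrite (LV1 _ _ _ pv').
  have s1 : sat (glue (updV a x None) (updV c x (Some v))) q.
    by move: hv; rewrite (LV2 _ _ _ (negbT pv)).
  have s2 : sat (glue (updV a' x None) (updV c x (Some v))) q by rewrite -(hR1 _ _ hn).
  by exists v; rewrite (LV2 _ _ _ (negbT pv)).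
move=> a a' e c; apply/idP/idP; [exact: key | exact: key (esym e) c].
Qed.

Lemma claim_ExE x q : Claim q -> Claim (FExE x q).
Proof.
move=> [T1 [tau1 [hT1 hR1]]].
eexists; exists (fun a => ([ffun t => [exists v, PE v && (tau1 (updE a x (Some v)) == t)]],
                         tau1 (updE a x None))); split.
  rewrite card_prod card_ffun card_bool /=; apply: leq_mul => //.
  by rewrite leq_exp2l.
have key : forall a a', ([ffun t => [exists v, PE v && (tau1 (updE a x (Some v)) == t)]],
                         tau1 (updE a x None)) =
                        ([ffun t => [exists v, PE v && (tau1 (updE a' x (Some v)) == t)]],
                         tau1 (updE a' x None)) ->
   forall c, sat (glue a c) (FExE x q) -> sat (glue a' c) (FExE x q).
  move=> a a' [hf hn] c; rewrite !sat_ExE => /existsP [v hv]; apply/existsP.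
  case pv: (PE v).
    have s1 : sat (glue (updE a x (Some v)) c) q by move: hv; rewrite (LE1 _ _ _ pv).
    have := congr1 (fun f : {ffun T1 -> bool} => f (tau1 (updE a x (Some v)))) hf; rewrite !ffunE.
    have -> : [exists v0, PE v0 && (tau1 (updE a x (Some v0)) == tau1 (updE a x (Some v)))].
      by apply/existsP; exists v; rewrite pv eqxx.
    move/esym/existsP => [v' /andP [pv' /eqP ev']].
    have s2 : sat (glue (updE a' x (Some v')) c) q by rewrite (hR1 _ _ ev').
    by exists v'; rewrite (LE1 _ _ _ pv').
  have s1 : sat (glue (updE a x None) (updE c x (Some v))) q.
    by move: hv; rewrite (LE2 _ _ _ (negbT pv)).
  have s2 : sat (glue (updE a' x None) (updE c x (Some v))) q by rewrite -(hR1 _ _ hn).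
  by exists v; rewrite (LE2 _ _ _ (negbT pv)).
move=> a a' e c; apply/idP/idP; [exact: key | exact: key (esym e) c].
Qed.

Lemma LS1 a c X S : upd (aVS (glue a c)) X S = aVS (glue (updVS a X S) (updVS c X S)).
Proof.
apply: functional_extensionality => z; rewrite /= /upd.
by case: eqP => _ //; rewrite setID.
Qed.

Lemma LS2 a c X S' S : aVS (glue (updVS a X S') (updVS c X S)) =
   upd (aVS (glue a c)) X ((S' :&: PVs) :|: (S :\: PVs)).
Proof. by apply: functional_extensionality => z; rewrite /= /upd; case: eqP. Qed.

Lemma LT1 a c X S : upd (aES (glue a c)) X S = aES (glue (updES a X S) (updES c X S)).
Proof.
apply: functional_extensionality => z; rewrite /= /upd.
by case: eqP => _ //; rewrite setID.
Qed.

Lemma LT2 a c X S' S : aES (glue (updES a X S') (updES c X S)) =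
   upd (aES (glue a c)) X ((S' :&: PEs) :|: (S :\: PEs)).
Proof. by apply: functional_extensionality => z; rewrite /= /upd; case: eqP. Qed.

Lemma claim_ExVS X q : Claim q -> Claim (FExVS X q).
Proof.
move=> [T1 [tau1 [hT1 hR1]]].
eexists; exists (fun a => [ffun t => [exists S, tau1 (updVS a X S) == t]]); split.
  by rewrite card_ffun card_bool /= leq_exp2l.
have key : forall a a', [ffun t => [exists S, tau1 (updVS a X S) == t]] =
                        [ffun t => [exists S, tau1 (updVS a' X S) == t]] ->
   forall c, sat (glue a c) (FExVS X q) -> sat (glue a' c) (FExVS X q).
  move=> a a' hf c; rewrite !sat_ExVS => /existsP [S hv]; apply/existsP.
  have s1 : sat (glue (updVS a X S) (updVS c X S)) q by move: hv; rewrite LS1.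
  have := congr1 (fun f : {ffun T1 -> bool} => f (tau1 (updVS a X S))) hf; rewrite !ffunE.
  have -> : [exists S0, tau1 (updVS a X S0) == tau1 (updVS a X S)].
    by apply/existsP; exists S.
  move/esym/existsP => [S' /eqP ev'].
  have s2 : sat (glue (updVS a' X S') (updVS c X S)) q by rewrite (hR1 _ _ ev').
  by exists ((S' :&: PVs) :|: (S :\: PVs)); rewrite -LS2.
move=> a a' e c; apply/idP/idP; [exact: key | exact: key (esym e) c].
Qed.

Lemma claim_ExES X q : Claim q -> Claim (FExES X q).
Proof.
move=> [T1 [tau1 [hT1 hR1]]].
eexists; exists (fun a => [ffun t => [exists S, tau1 (updES a X S) == t]]); split.
  by rewrite card_ffun card_bool /= leq_exp2l.
have key : forall a a', [ffun t => [exists S, tau1 (updES a X S) == t]] =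
                        [ffun t => [exists S, tau1 (updES a' X S) == t]] ->
   forall c, sat (glue a c) (FExES X q) -> sat (glue a' c) (FExES X q).
  move=> a a' hf c; rewrite !sat_ExES => /existsP [S hv]; apply/existsP.
  have s1 : sat (glue (updES a X S) (updES c X S)) q by move: hv; rewrite LT1.
  have := congr1 (fun f : {ffun T1 -> bool} => f (tau1 (updES a X S))) hf; rewrite !ffunE.
  have -> : [exists S0, tau1 (updES a X S0) == tau1 (updES a X S)].
    by apply/existsP; exists S.
  move/esym/existsP => [S' /eqP ev'].
  have s2 : sat (glue (updES a' X S') (updES c X S)) q by rewrite (hR1 _ _ ev').
  by exists ((S' :&: PEs) :|: (S :\: PEs)); rewrite -LT2.
move=> a a' e c; apply/idP/idP; [exact: key | exact: key (esym e) c].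
Qed.

Lemma claimC p : Claim p.
Proof.
elim: p => [x y|x y|x y|x X|x X|q IH|q IHq r IHr|x q IH|x q IH|X q IH|X q IH].
- exact: claim_Adj.
- exact: claim_EqV.
- exact: claim_EqE.
- exact: claim_InV.
- exact: claim_InE.
- exact: claim_Neg.
- exact: claim_And.
- exact: claim_ExV.
- exact: claim_ExE.
- exact: claim_ExVS.
- exact: claim_ExES.
Qed.
End Cut.

Lemma x_le_2x x : x <= 2 ^ x. Proof. exact: ltnW (ltn_expl x (ltnSn 1)). Qed.

Lemma Tw_S n : Tw n.+1 = 2 ^ (2 * Tw n). Proof. by []. Qed.

Lemma Tw_incr n : Tw n < Tw n.+1.
Proof.
rewrite Tw_S; apply: leq_trans (ltn_expl (Tw n) (ltnSn 1)) _.
by rewrite leq_exp2l // leq_pmull.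
Qed.

Lemma Tw_mono m n : m <= n -> Tw m <= Tw n.
Proof.
move=> /subnK <-; elim: (n - m) => [|k IH] //.
by rewrite addSn; apply: leq_trans IH (ltnW (Tw_incr _)).
Qed.

Lemma Tw_gt n : n < Tw n.
Proof. by elim: n => [|n IH] //; apply: leq_trans (Tw_incr n). Qed.

Lemma Tw_sq n : Tw n * Tw n <= Tw n.+1.
Proof.
rewrite Tw_S mul2n -addnn expnD; apply: leq_mul; exact: x_le_2x.
Qed.

Lemma Tw_exp n : 2 ^ Tw n * Tw n <= Tw n.+1.
Proof.
rewrite Tw_S mul2n -addnn expnD; apply: leq_mul => //; exact: x_le_2x.
Qed.

Lemma Tw_exp2 n : 2 ^ Tw n <= Tw n.+1.
Proof. by rewrite Tw_S leq_exp2l // leq_pmull. Qed.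

Lemma atb_Tw b : atb b <= Tw (3 + b).
Proof.
rewrite /atb add3n Tw_S.
have h1 : 8 * b.+1 ^ 3 <= 2 ^ (3 * b + 3).
  rewrite expnD mulnC; apply: leq_mul => //.
  by rewrite (mulnC 3 b) expnM leq_exp2r //; apply: (ltn_expl b (ltnSn 1)).
apply: leq_trans h1 _; rewrite leq_exp2l //.
have := Tw_gt b.+1; have := ltn_expl (2 * Tw b.+1) (ltnSn 1); rewrite -Tw_S; lia.
Qed.

Lemma gb_Tw b p : gb b p <= Tw (msize p + b).
Proof.
elim: p => [x y|x y|x y|x X|x X|q IH|q IHq r IHr|x q IH|x q IH|X q IH|X q IH] /=;
  try exact: atb_Tw.
- by rewrite -Tw_S; apply: leq_trans IH (ltnW (Tw_incr _)).
- rewrite -Tw_S; apply: leq_trans (leq_mul IHq IHr) _.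
  apply: leq_trans (leq_mul (Tw_mono (_ : _ <= msize q + msize r + b))
                            (Tw_mono (_ : _ <= msize q + msize r + b))) _; try lia.
  exact: Tw_sq.
- rewrite -Tw_S; apply: leq_trans (leq_mul (leq_pexp2l _ IH) IH) _ => //.
  exact: Tw_exp.
- rewrite -Tw_S; apply: leq_trans (leq_mul (leq_pexp2l _ IH) IH) _ => //.
  exact: Tw_exp.
- rewrite -Tw_S; apply: leq_trans (leq_pexp2l _ IH) _ => //.
  exact: Tw_exp2.
- rewrite -Tw_S; apply: leq_trans (leq_pexp2l _ IH) _ => //.
  exact: Tw_exp2.
Qed.

Lemma take_flat_split (T : Type) (ss : seq (seq T)) l : l <= size (flatten ss) ->
  exists j r, j <= size ss /\ take l (flatten ss) = flatten (take j ss) ++ take r (nth [::] ss j).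
Proof.
elim: ss l => [|s ss IH] l /=.
  by move=> _; exists 0, 0.
rewrite size_cat => hl; case: (leqP l (size s)) => hs.
  exists 0, l; split => //=; rewrite take_cat.
  case: ltnP => // hs'.
  have -> : l = size s by apply/eqP; rewrite eqn_leq hs hs'.
  by rewrite subnn take0 cats0 take_size.
have [j [r [hj ht]]] : exists j r, j <= size ss /\ take (l - size s) (flatten ss) = flatten (take j ss) ++ take r (nth [::] ss j) by apply: IH; lia.
exists j.+1, r; split => //=.
by rewrite take_cat ltnNge (ltnW hs) /= ht catA.
Qed.

Section Main.
Variables (V E : finType) (src dst : E -> V) (bags : seq {set V}) (w : nat) (phi : mso2) (v0 : V).
Hypothesis hpd : path_decomp src dst bags.
Hypothesis hw : pd_width bags = w.

Local Notation el := (V + E)%type.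

Definition key (o : el) : nat :=
  match o with
  | inl v => find (fun B : {set V} => v \in B) bags
  | inr e => find (fun B : {set V} => (src e \in B) && (dst e \in B)) bags
  end.

Definition leK (a b : el) := key a <= key b.
Definition ord : seq el := sort leK (enum {: el}).

Lemma ord_uniq : uniq ord. Proof. by rewrite sort_uniq enum_uniq. Qed.
Lemma mem_ord o : o \in ord. Proof. by rewrite mem_sort mem_enum. Qed.
Lemma size_ord : size ord = #|V| + #|E|.
Proof. by rewrite size_sort -cardE card_sum. Qed.
Lemma ord_sorted : sorted leK ord.
Proof. by apply: sort_sorted => a b; rewrite /leK leq_total. Qed.

Lemma key_idx i j : i <= j -> j < size ord ->
  key (nth (inl v0) ord i) <= key (nth (inl v0) ord j).
Proof.
move=> ij jl.
have htr : transitive leK by move=> b a c h1 h2; exact: leq_trans h1 h2.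
have hrf : reflexive leK by move=> a; exact: leqnn.
apply: (sorted_leq_nth htr hrf (inl v0) ord_sorted) => //; rewrite inE; lia.
Qed.

Lemma key_index o : key (nth (inl v0) ord (index o ord)) = key o.
Proof. by rewrite nth_index // mem_ord. Qed.

Lemma index_lt o : index o ord < size ord.
Proof. by rewrite index_mem mem_ord. Qed.

Lemma key_V v : v \in nth set0 bags (key (inl v)) /\ key (inl v) < size bags.
Proof.
have h : has (fun B : {set V} => v \in B) bags.
  by have [B Bin vB] := hpd.1 v; apply/hasP; exists B.
by split; [exact: (nth_find set0 h) | rewrite /= -has_find].
Qed.

Lemma key_V_min v i : v \in nth set0 bags i -> key (inl v) <= i.
Proof.
move=> h; rewrite leqNgt; apply/negP => /(before_find set0).
by rewrite h.
Qed.

Lemma key_E e : (src e \in nth set0 bags (key (inr e))) && (dst e \in nth set0 bags (key (inr e)))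
   /\ key (inr e) < size bags.
Proof.
have h : has (fun B : {set V} => (src e \in B) && (dst e \in B)) bags.
  by have [B Bin vB] := hpd.2.1 e; apply/hasP; exists B.
by split; [exact: (nth_find set0 h) | rewrite /= -has_find].
Qed.

Lemma key_E_inc v e : incident src dst v e -> v \in nth set0 bags (key (inr e)).
Proof.
have [/andP [h1 h2] _] := key_E e.
by rewrite /incident; case/orP => /eqP ->.
Qed.

Lemma bag_bound k : #|nth set0 bags k| <= w.+1.
Proof.
case: (ltnP k (size bags)) => hk; last by rewrite nth_default // cards0.
have := @leq_bigmax_seq _ bags predT (fun B : {set V} => #|B|) _ (mem_nth set0 hk) isT.
move: hw; rewrite /pd_width => <- h; apply: leq_trans h _; exact: leqSpred.
Qed.

Definition PVj j (v : V) := index (inl v) ord < j.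
Definition PEj j (e : E) := index (inr e) ord < j.

Lemma hl1 a j : a < j -> a <= j - 1. Proof. lia. Qed.
Lemma hl2 j c s : j <= c -> c < s -> j - 1 < s. Proof. lia. Qed.
Lemma hl3 j c : j <= c -> j - 1 <= c. Proof. lia. Qed.

Lemma boundary j : #|B1 src dst (PVj j) (PEj j)| <= w.+1 /\ #|B2 src dst (PVj j) (PEj j)| <= w.+1.
Proof.
pose kap := key (nth (inl v0) ord (j - 1)).
have interp := hpd.2.2.
suff [s1 s2] : B1 src dst (PVj j) (PEj j) \subset nth set0 bags kap /\
               B2 src dst (PVj j) (PEj j) \subset nth set0 bags kap.
  by split; [apply: leq_trans (subset_leq_card s1) (bag_bound _) | apply: leq_trans (subset_leq_card s2) (bag_bound _)].
split; apply/subsetP => v; rewrite inE => /andP [pv /existsP [e /andP [pe ive]]];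
  rewrite /PVj /PEj -?leqNgt in pv pe.
- have ie := index_lt (inr e).
  have k1 : key (inl v) <= kap.
    rewrite -key_index; apply: key_idx; [exact: hl1 pv | exact: hl2 pe ie].
  have k2 : kap <= key (inr e).
    rewrite -(key_index (inr e)); apply: key_idx => //; exact: hl3 pe.
  have [kv _] := key_V v.
  have [_ ke] := key_E e.
  exact: (interp _ _ _ _ k1 k2 ke kv (key_E_inc ive)).
- have iv := index_lt (inl v).
  have k1 : key (inr e) <= kap.
    rewrite -key_index; apply: key_idx; [exact: hl1 pe | exact: hl2 pv iv].
  have k2 : kap <= key (inl v).
    rewrite -(key_index (inl v)); apply: key_idx => //; exact: hl3 pv.
  have k3 := key_V_min (key_E_inc ive).
  have -> : kap = key (inl v) by apply/eqP; rewrite eqn_leq k2 /=; exact: leq_trans k3 k1.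
  by have [kv _] := key_V v.
Qed.

Definition m := msize phi.
Definition M := nb phi.
Definition fvV := [seq z <- iota 0 M | freeV phi z].
Definition fvVS := [seq z <- iota 0 M | freeVS phi z].
Definition fvE := [seq z <- iota 0 M | freeE phi z].
Definition fvES := [seq z <- iota 0 M | freeES phi z].

Lemma mem_fvV z : (z \in fvV) = freeV phi z.
Proof.
rewrite mem_filter mem_iota add0n /=; case h: (freeV phi z) => //=.
by apply: nb_free; rewrite h.
Qed.
Lemma mem_fvVS z : (z \in fvVS) = freeVS phi z.
Proof.
rewrite mem_filter mem_iota add0n /=; case h: (freeVS phi z) => //=.
by apply: nb_free; rewrite h !orbT.
Qed.
Lemma mem_fvE z : (z \in fvE) = freeE phi z.
Proof.
rewrite mem_filter mem_iota add0n /=; case h: (freeE phi z) => //=.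
by apply: nb_free; rewrite h !orbT.
Qed.
Lemma mem_fvES z : (z \in fvES) = freeES phi z.
Proof.
rewrite mem_filter mem_iota add0n /=; case h: (freeES phi z) => //=.
by apply: nb_free; rewrite h !orbT.
Qed.

Lemma size_fvV : size fvV + size fvVS <= m.
Proof. by rewrite !size_filter; apply: count_freeV; exact: iota_uniq. Qed.
Lemma size_fvE : size fvE + size fvES <= m.
Proof. by rewrite !size_filter; apply: count_freeE; exact: iota_uniq. Qed.

Definition dvl (o : el) : seq (dvar V E) :=
  match o with
  | inl v => [seq dObjV E x v | x <- fvV] ++ [seq dSetV E X v | X <- fvVS]
  | inr e => [seq dObjE V x e | x <- fvE] ++ [seq dSetE V X e | X <- fvES]
  end.

Definition elemof (d : dvar V E) : el :=
  match d with
  | inl (inl (_, v)) => inl v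
  | inl (inr (_, e)) => inr e
  | inr (inl (_, v)) => inl v
  | inr (inr (_, e)) => inr e
  end.

Lemma dvl_mem o d : d \in dvl o -> elemof d = o /\ Dvars phi d.
Proof.
case: o => [v|e] /=; rewrite mem_cat => /orP [] /mapP [x xin ->] /=; split => //.
- by rewrite -mem_fvV.
- by rewrite -mem_fvVS.
- by rewrite -mem_fvE.
- by rewrite -mem_fvES.
Qed.

Lemma dvl_mem2 d : Dvars phi d -> d \in dvl (elemof d).
Proof.
case: d => [[[x u]|[x u]]|[[x u]|[x u]]] /= h; rewrite mem_cat; apply/orP;
  [left|left|right|right]; apply/mapP; exists x => //.
- by rewrite mem_fvV.
- by rewrite mem_fvE.
- by rewrite mem_fvVS.
- by rewrite mem_fvES.
Qed.

Lemma size_dvl o : size (dvl o) <= m.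
Proof.
case: o => [v|e] /=; rewrite size_cat !size_map; [exact: size_fvV | exact: size_fvE].
Qed.

Lemma uniq_dvl o : uniq (dvl o).
Proof.
case: o => [v|e] /=; rewrite cat_uniq; apply/and3P; split.
- by rewrite map_inj_uniq ?filter_uniq ?iota_uniq // => x y [].
- by apply/negP => /hasP [d /mapP [X _ ->] /mapP [x _ ex]].
- by rewrite map_inj_uniq ?filter_uniq ?iota_uniq // => x y [].
- by rewrite map_inj_uniq ?filter_uniq ?iota_uniq // => x y [].
- by apply/negP => /hasP [d /mapP [X _ ->] /mapP [x _ ex]].
- by rewrite map_inj_uniq ?filter_uniq ?iota_uniq // => x y [].
Qed.

Definition ds : seq (dvar V E) := flatten [seq dvl o | o <- ord].

Lemma ds_mem d : (d \in ds) = Dvars phi d.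
Proof.
apply/flattenP/idP => [[s /mapP [o _ ->] /dvl_mem []] //|h].
by exists (dvl (elemof d)); [apply: map_f; exact: mem_ord | exact: dvl_mem2].
Qed.

Lemma uniq_flat_gen (s : seq el) : uniq s -> uniq (flatten [seq dvl o | o <- s]).
Proof.
elim: s => //= a s IH /andP [ans us]; rewrite cat_uniq uniq_dvl IH // andbT.
apply/hasP => [[d /flattenP [t /mapP [o os ->] dt] dat]].
have [e1 _] := dvl_mem dt; have [e2 _] := dvl_mem dat.
by move: ans; rewrite -e2 e1 os.
Qed.

Lemma ds_uniq : uniq ds.
Proof. exact: uniq_flat_gen ord_uniq. Qed.

Lemma size_flat_gen2 (s : seq el) : size (flatten [seq dvl o | o <- s]) <= m * size s.
Proof.
elim: s => //= a s IH; rewrite size_cat mulnS leq_add //; exact: size_dvl.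
Qed.

Lemma size_ds : size ds <= m * (#|V| + #|E|).
Proof. by rewrite -size_ord; exact: size_flat_gen2. Qed.

Lemma F_dep d d' : (forall x, Dvars phi x -> d x = d' x) ->
  Ffun src dst phi d <-> Ffun src dst phi d'.
Proof.
move=> h.
have cV : forall x, freeV phi x -> [set v | d (dObjV E x v)] = [set v | d' (dObjV E x v)].
  by move=> x fx; apply/setP => v; rewrite !inE h.
have cE : forall x, freeE phi x -> [set v | d (dObjE V x v)] = [set v | d' (dObjE V x v)].
  by move=> x fx; apply/setP => v; rewrite !inE h.
have cons : consistent phi d <-> consistent phi d'.
  rewrite /consistent; split => [[h1 h2]|[h1 h2]]; split => x fx.
  - by rewrite -cV // h1.
  - by rewrite -cE // h2.
  - by rewrite cV // h1.
  - by rewrite cE // h2.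
have ms : msat src dst (encV phi d) (encE phi d) (encVS d) (encES d) phi =
          msat src dst (encV phi d') (encE phi d') (encVS d') (encES d') phi.
  apply: msat_coinc => z hz.
  - by rewrite /encV hz; apply: eq_pick => v /=; rewrite h.
  - by rewrite /encE hz; apply: eq_pick => v /=; rewrite h.
  - by apply/setP => v; rewrite !inE h.
  - by apply/setP => v; rewrite !inE h.
by rewrite /Ffun ms; split => [[/cons c s]|[/cons c s]].
Qed.

Definition mixP j (d g : dvar V E -> bool) (y : dvar V E) :=
  if index (elemof y) ord < j then d y else g y.
Definition cPV j (d : dvar V E -> bool) x := #|[set v | PVj j v && d (dObjV E x v)]|.
Definition cQV j (g : dvar V E -> bool) x := #|[set v | ~~ PVj j v && g (dObjV E x v)]|.
Definition cPE j (d : dvar V E -> bool) x := #|[set e | PEj j e && d (dObjE V x e)]|.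
Definition cQE j (g : dvar V E -> bool) x := #|[set e | ~~ PEj j e && g (dObjE V x e)]|.

Lemma card_mixV j d g x : #|[set v | mixP j d g (dObjV E x v)]| = cPV j d x + cQV j g x.
Proof.
rewrite -(cardsID [set v | PVj j v]); congr (_ + _); apply: eq_card => v;
  rewrite !inE /mixP /PVj /=; by case: ifP; rewrite ?andbT ?andbF.
Qed.
Lemma card_mixE j d g x : #|[set e | mixP j d g (dObjE V x e)]| = cPE j d x + cQE j g x.
Proof.
rewrite -(cardsID [set e | PEj j e]); congr (_ + _); apply: eq_card => v;
  rewrite !inE /mixP /PEj /=; by case: ifP; rewrite ?andbT ?andbF.
Qed.

Definition AP j (d : dvar V E -> bool) : asg V E :=
  Asg (fun x => [pick v | PVj j v && d (dObjV E x v)]) (fun x => [pick e | PEj j e && d (dObjE V x e)])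
      (encVS d) (encES d).
Definition AQ j (g : dvar V E -> bool) : asg V E :=
  Asg (fun x => [pick v | ~~ PVj j v && g (dObjV E x v)]) (fun x => [pick e | ~~ PEj j e && g (dObjE V x e)])
      (encVS g) (encES g).

Lemma pick_one (T : finType) (P : pred T) v : (forall u, P u = (u == v)) -> [pick u | P u] = Some v.
Proof.
move=> H; case: pickP => [u pu|h]; first by move: pu; rewrite H => /eqP ->.
by have := h v; rewrite H eqxx.
Qed.

Lemma pick_none (T : finType) (P : pred T) : (forall u, ~~ P u) -> [pick u | P u] = None.
Proof. by move=> H; case: pickP => // u pu; have := H u; rewrite pu. Qed.

Lemma encV_mix j d g x : #|[set v | mixP j d g (dObjV E x v)]| = 1 -> freeV phi x ->
  encV phi (mixP j d g) x = glV (PVj j) (aV (AP j d) x) (aV (AQ j g) x).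
Proof.
move=> h1 fx; rewrite /encV fx.
move/eqP/cards1P: h1 => [u hu].
have hm : forall v, mixP j d g (dObjV E x v) = (v == u).
  by move=> v; have := congr1 (fun S : {set _} => v \in S) hu; rewrite !inE.
rewrite (pick_one hm) /= /glV.
case pu: (PVj j u).
  have -> : [pick v | PVj j v && d (dObjV E x v)] = Some u.
    apply: pick_one => v; case pv: (PVj j v) => /=.
      by rewrite -hm /mixP /=; move: pv; rewrite /PVj => ->.
    by apply/esym/eqP => ev; rewrite ev pu in pv.
  by rewrite /pV pu.
have -> : [pick v | PVj j v && d (dObjV E x v)] = None.
  apply: pick_none => v; apply/negP => /andP [pv dv].
  have := hm v; rewrite /mixP /= -/(PVj j v) pv dv => /esym/eqP ev.
  by rewrite ev pu in pv.
have -> : [pick v | ~~ PVj j v && g (dObjV E x v)] = Some u.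
  apply: pick_one => v; case pv: (PVj j v) => /=.
    by apply/esym/eqP => ev; rewrite ev pu in pv.
  by rewrite -hm /mixP /=; move: pv; rewrite /PVj => ->.
by rewrite /= /qV pu.
Qed.

Lemma encE_mix j d g x : #|[set e | mixP j d g (dObjE V x e)]| = 1 -> freeE phi x ->
  encE phi (mixP j d g) x = glE (PEj j) (aE (AP j d) x) (aE (AQ j g) x).
Proof.
move=> h1 fx; rewrite /encE fx.
move/eqP/cards1P: h1 => [u hu].
have hm : forall v, mixP j d g (dObjE V x v) = (v == u).
  by move=> v; have := congr1 (fun S : {set _} => v \in S) hu; rewrite !inE.
rewrite (pick_one hm) /= /glE.
case pu: (PEj j u).
  have -> : [pick v | PEj j v && d (dObjE V x v)] = Some u.
    apply: pick_one => v; case pv: (PEj j v) => /=.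
      by rewrite -hm /mixP /=; move: pv; rewrite /PEj => ->.
    by apply/esym/eqP => ev; rewrite ev pu in pv.
  by rewrite /pE pu.
have -> : [pick v | PEj j v && d (dObjE V x v)] = None.
  apply: pick_none => v; apply/negP => /andP [pv dv].
  have := hm v; rewrite /mixP /= -/(PEj j v) pv dv => /esym/eqP ev.
  by rewrite ev pu in pv.
have -> : [pick v | ~~ PEj j v && g (dObjE V x v)] = Some u.
  apply: pick_one => v; case pv: (PEj j v) => /=.
    by apply/esym/eqP => ev; rewrite ev pu in pv.
  by rewrite -hm /mixP /=; move: pv; rewrite /PEj => ->.
by rewrite /= /qE pu.
Qed.

Lemma sat_mix j d g : consistent phi (mixP j d g) ->
  msat src dst (encV phi (mixP j d g)) (encE phi (mixP j d g)) (encVS (mixP j d g)) (encES (mixP j d g)) phi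
  = sat src dst (glue (PVj j) (PEj j) (AP j d) (AQ j g)) phi.
Proof.
move=> [c1 c2]; rewrite /sat; apply: msat_coinc => z hz /=.
- exact: encV_mix (c1 z hz) hz.
- exact: encE_mix (c2 z hz) hz.
- apply/setP => v; rewrite !inE /mixP /PVj /=; by case: ifP; rewrite ?andbT ?andbF ?orbF.
- apply/setP => v; rewrite !inE /mixP /PEj /=; by case: ifP; rewrite ?andbT ?andbF ?orbF.
Qed.

Lemma minn2_lt a : minn a 2 < 3. Proof. lia. Qed.

Lemma idx_fv (T : eqType) (s : seq T) x k : x \in s -> size s <= k -> index x s < k.
Proof. by move=> xs sk; apply: leq_trans sk; rewrite index_mem. Qed.

Lemma cut_type j : exists (T : finType) (tau : (dvar V E -> bool) -> T),
  #|T| <= gb w.+1 phi * 3 ^ m * 3 ^ m /\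
  forall d d', tau d = tau d' -> forall g,
     Ffun src dst phi (mixP j d g) <-> Ffun src dst phi (mixP j d' g).
Proof.
have [hb1 hb2] := boundary j.
have [T [tau [hT hR]]] := claimC hb1 hb2 phi.
eexists; exists (fun d => (tau (AP j d),
   [ffun i : 'I_m => (inord (minn (cPV j d (nth 0 fvV i)) 2) : 'I_3)],
   [ffun i : 'I_m => (inord (minn (cPE j d (nth 0 fvE i)) 2) : 'I_3)])).
split.
  rewrite !card_prod !card_ffun !card_ord; apply: leq_mul => //; apply: leq_mul => //.
move=> d d' [ht hv he] g.
have mV : forall x, freeV phi x -> minn (cPV j d x) 2 = minn (cPV j d' x) 2.
  move=> x fx; have xin : x \in fvV by rewrite mem_fvV.
  have il : index x fvV < m := idx_fv xin (leq_trans (leq_addr _ _) size_fvV).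
  have := congr1 (fun f : {ffun 'I_m -> 'I_3} => val (f (Ordinal il))) hv.
  by rewrite !ffunE /= nth_index // !inordK // minn2_lt.
have mE : forall x, freeE phi x -> minn (cPE j d x) 2 = minn (cPE j d' x) 2.
  move=> x fx; have xin : x \in fvE by rewrite mem_fvE.
  have il : index x fvE < m := idx_fv xin (leq_trans (leq_addr _ _) size_fvE).
  have := congr1 (fun f : {ffun 'I_m -> 'I_3} => val (f (Ordinal il))) he.
  by rewrite !ffunE /= nth_index // !inordK // minn2_lt.
have consE : consistent phi (mixP j d g) <-> consistent phi (mixP j d' g).
  rewrite /consistent.
  split => [[h1 h2]|[h1 h2]]; split => x fx.
  - move: (h1 x fx) (mV x fx); rewrite !card_mixV; lia.
  - move: (h2 x fx) (mE x fx); rewrite !card_mixE; lia.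
  - move: (h1 x fx) (mV x fx); rewrite !card_mixV; lia.
  - move: (h2 x fx) (mE x fx); rewrite !card_mixE; lia.
rewrite /Ffun; split => [[c1 s1]|[c1 s1]].
  have c2 : consistent phi (mixP j d' g) by apply/consE.
  split => //; rewrite sat_mix // -(hR _ _ ht); by rewrite -sat_mix.
have c2 : consistent phi (mixP j d g) by apply/consE.
split => //; rewrite sat_mix // (hR _ _ ht); by rewrite -sat_mix.
Qed.

Lemma memA j y : Dvars phi y ->
  (y \in flatten (take j [seq dvl o | o <- ord])) = (index (elemof y) ord < j).
Proof.
move=> hy; rewrite -map_take; apply/flattenP/idP.
  move=> [t /mapP [o oin ->] yt]; have [eo _] := dvl_mem yt.
  by move: oin; rewrite in_take ?mem_ord // eo.
move=> h; exists (dvl (elemof y)); last exact: dvl_mem2.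
by apply: map_f; rewrite in_take // mem_ord.
Qed.

Lemma level_type l : l <= size ds -> exists (T : finType) (tau : (dvar V E -> bool) -> T),
  #|T| <= gb w.+1 phi * 3 ^ m * 3 ^ m * 2 ^ m /\
  forall d d', tau d = tau d' -> eqvP (Ffun src dst phi) ds l d d'.
Proof.
move=> hl; have [j [r [hj ht]]] := take_flat_split hl.
set R := take r (nth [::] [seq dvl o | o <- ord] j).
have sR : size R <= m.
  rewrite size_take; apply: leq_trans (geq_minr _ _) _.
  case: (ltnP j (size ord)) => hjo.
    by rewrite (nth_map (inl v0)) //; exact: size_dvl.
  by rewrite nth_default // size_map.
have [T [tau [hT hc]]] := cut_type j.
pose dd := dObjV E 0 v0.
eexists; exists (fun d => (tau d, [ffun i : 'I_m => d (nth dd R i)])).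
split.
  by rewrite card_prod card_ffun card_bool card_ord; apply: leq_mul.
move=> d d' [et eb] g.
have agR : forall y, y \in R -> d y = d' y.
  move=> y yR; have il : index y R < m := idx_fv yR sR.
  have := congr1 (fun f : {ffun 'I_m -> bool} => f (Ordinal il)) eb.
  by rewrite !ffunE /= nth_index.
pose g2 := fun y => if y \in R then d y else g y.
have key : forall d0, (forall y, y \in R -> d0 y = d y) ->
    (Ffun src dst phi (mixl ds l d0 g) <-> Ffun src dst phi (mixP j d0 g2)).
  move=> d0 h0; apply: F_dep => y hy; rewrite /mixl /mixP ht mem_cat (memA _ hy).
  case: (index (elemof y) ord < j) => //=.
  by rewrite /g2; case: ifP => // yR; rewrite h0.
split.
  move/(key d (fun _ _ => erefl))/(hc _ _ et g2).
  by move/(key d' (fun y yR => esym (agR y yR))).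
move/(key d' (fun y yR => esym (agR y yR)))/(hc _ _ et g2).
by move/(key d (fun _ _ => erefl)).
Qed.
End Main.

Theorem mainTheorem2 :
  exists f : nat -> nat, computable f /\
  forall (V E : finType) (src dst : E -> V),
    simple_graph src dst -> 0 < #|V| ->
  forall w : nat, is_pathwidth src dst w ->
  forall phi : mso2,
  exists B : obdd (dvar V E),
    obdd_computes B (Dvars phi) (Ffun src dst phi) /\
    osize B <= f (w + msize phi) * (#|V| + #|E|).
Proof.
exists fbound; split; first exact: fbound_computable.
move=> V E src dst _ hV w [[bags [hpd hw]] _] phi.
have [v0 _] := card_gt0P hV.
have hD : forall x, x \in ds src dst bags phi -> Dvars phi x by move=> x; rewrite ds_mem.
have hF : forall d d', (forall x, x \in ds src dst bags phi -> d x = d' x) ->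
    (Ffun src dst phi d <-> Ffun src dst phi d').
  by move=> d d' h; apply: F_dep => x hx; apply: h; rewrite ds_mem.
have [B [hB hs]] := @obdd_build (dvar V E) (Dvars phi) (Ffun src dst phi) (ds src dst bags phi)
  (dObjV E 0 v0) (gb w.+1 phi * 3 ^ m phi * 3 ^ m phi * 2 ^ m phi)
  (ds_uniq src dst bags phi) hD hF
  (fun l hl => level_type v0 hpd hw hl).
exists B; split => //.
apply: leq_trans hs _.
set k := w + msize phi.
set n := #|V| + #|E|.
have hn : 0 < n by rewrite /n; lia.
have hm : m phi <= k by rewrite /m /k; lia.
have hN := size_ds src dst bags phi.
rewrite -/n in hN.
have g1 : gb w.+1 phi <= Tw k.+1.
  apply: leq_trans (gb_Tw _ _) (Tw_mono _); rewrite /k; lia.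
have p3 : 3 ^ m phi <= 3 ^ k by rewrite leq_exp2l.
have p2 : 2 ^ m phi <= 2 ^ k by rewrite leq_exp2l.
have hN2 : (size (ds src dst bags phi)).+1 <= k.+1 * n.
  apply: leq_trans (_ : (m phi * n).+1 <= _); first by rewrite ltnS.
  by rewrite mulSn; rewrite addnC -addn1 leq_add // leq_mul.
have hc : gb w.+1 phi * 3 ^ m phi * 3 ^ m phi * 2 ^ m phi <= Tw k.+1 * (3 ^ k * 3 ^ k * 2 ^ k).
  by rewrite !mulnA; apply: leq_mul => //; apply: leq_mul => //; apply: leq_mul.
apply: leq_trans (leq_mul hc hN2) _.
by rewrite /fbound !mulnA.
Qed.
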